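(* Let $X$ be a compact zero-dimensional metric space, $X_{\max},X_{\min}\subseteq X$ closed subsets, and $\varphi:X\setminus X_{\max}\to X\setminus X_{\min}$ a homeomorphism. Then the following are equivalent: (i) for every clopen $U\subseteq X$ with $X_{\min}\subseteq U$, $\bigcup_{n=0}^{\infty}\varphi^n(U)=X$; (ii) for every clopen $V\subseteq X$ with $X_{\max}\subseteq V$, $\bigcup_{n=0}^{\infty}\varphi^{-n}(V)=X$.
   Context: For $n\in\mathbb{Z}$, $\varphi^n$ denotes the $n$-fold composite of $\varphi$ (of $\varphi^{-1}$ if $n<0$) on its natural domain, $\varphi^0=\mathrm{id}_X$, and for $U\subseteq X$, $\varphi^n(U)=\varphi^n(U\cap\mathrm{dom}\,\varphi^n)$. *)

(* Defs.v *)
From HB Require Import structures.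
From mathcomp Require Import all_boot all_order all_algebra.
From mathcomp Require Import all_classical all_reals all_analysis.
Set Implicit Arguments. Unset Strict Implicit. Unset Printing Implicit Defensive.
Local Open Scope classical_set_scope.

(* Image of U under the n-fold composite of a partial map f whose domain is
   the complement of D:  f^n(U) = f^n(U ∩ dom f^n), where
   dom f^n = { x | f^k x ∉ D for all k < n }. *)
Definition iter_image {T : Type} (f : T -> T) (D : set T) (n : nat) (U : set T)
  : set T :=
  [set iter n f x | x in [set x | U x /\ (forall k, (k < n)%N -> ~ D (iter k f x))]].

(* Main.v *)
Require Import Defs.
From HB Require Import structures.
From mathcomp Require Import all_boot all_order all_algebra.
From mathcomp Require Import all_classical all_reals all_analysis.
From mathcomp Require Import zify.
From mathcomp Require Import finmap.
Set Implicit Arguments. Unset Strict Implicit.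
Local Open Scope classical_set_scope.

Definition pt_of (T : topologicalType) (x : T) : Type := T.
HB.instance Definition _ (T : topologicalType) (x : T) :=
  Topological.copy (@pt_of T x) T.
HB.instance Definition _ (T : topologicalType) (x : T) :=
  isPointed.Build (@pt_of T x) x.

Lemma cover_np (T : topologicalType) (A : set T) : compact A -> cover_compact A.
Proof.
move=> cA I D f fo Af.
case: (pselect (A !=set0)) => [[x Ax]|A0]; last first.
  exists finmap.fset0 => // y Ay; exfalso; apply: A0; by exists y.
have cA' : @compact (@pt_of T x) A by exact: cA.
rewrite compact_cover in cA'.
exact: (cA' I D f fo Af).
Qed.

Lemma iter_back (T : Type) (f g : T -> T) (A : set T)
  (gf : forall x, ~ A x -> g (f x) = x) n x :
  (forall k, (k < n)%N -> ~ A (iter k f x)) ->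
  forall j, (j <= n)%N -> iter j g (iter n f x) = iter (n - j) f x.
Proof.
move=> H; elim=> [|j IH] jn; first by rewrite subn0.
rewrite iterS IH ?(ltnW jn) //.
have -> : (n - j = (n - j.+1).+1)%N by lia.
rewrite iterS gf //; apply: H; lia.
Qed.

Lemma iter_imageE (T : Type) (f g : T -> T) (A B : set T)
  (hf : forall x, ~ A x -> ~ B (f x)) (hg : forall y, ~ B y -> ~ A (g y))
  (gf : forall x, ~ A x -> g (f x) = x) (fg : forall y, ~ B y -> f (g y) = y)
  n U :
  iter_image f A n U =
  [set y | (forall j, (j < n)%N -> ~ B (iter j g y)) /\ U (iter n g y)].
Proof.
apply/seteqP; split => y.
- case=> x [Ux Hx] <-; split.
  + move=> j jn; rewrite (iter_back gf Hx (ltnW jn)).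
    have -> : (n - j = (n - j.+1).+1)%N by lia.
    rewrite iterS; apply: hf; apply: Hx; lia.
  + by rewrite (iter_back gf Hx (leqnn n)) subnn.
- case=> Hy Uy; exists (iter n g y); first split => //.
  + move=> k kn; rewrite (iter_back fg Hy (ltnW kn)).
    have -> : (n - k = (n - k.+1).+1)%N by lia.
    rewrite iterS; apply: hg; apply: Hy; lia.
  + by rewrite (iter_back fg Hy (leqnn n)) subnn.
Qed.

Lemma open_Sn (T : topologicalType) (g : T -> T) (B U : set T) :
  closed B -> {within ~` B, continuous g} -> open U -> forall n,
  open [set y | (forall j, (j < n)%N -> ~ B (iter j g y)) /\ U (iter n g y)].
Proof.
move=> cB cg oU; elim=> [|n IH].
  suff -> : [set y | (forall j, (j < 0)%N -> ~ B (iter j g y)) /\ U (iter 0 g y)]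
     = U by [].
  by apply/seteqP; split => y //= [].
have oB : open (~` B) := closed_openC cB.
have cg' : {in ~` B, continuous g} by rewrite -continuous_open_subspace.
have := (@continuous_inP _ _ _ g oB).1 cg' _ IH.
suff -> : [set y | (forall j, (j < n.+1)%N -> ~ B (iter j g y)) /\ U (iter n.+1 g y)]
   = ~` B `&` g @^-1` [set y | (forall j, (j < n)%N -> ~ B (iter j g y)) /\ U (iter n g y)]
   by [].
apply/seteqP; split => y.
- case=> Hy Uy; split; first exact: (Hy 0%N).
  split; last by rewrite -iterSr.
  by move=> j jn; rewrite -iterSr; apply: Hy.
- case=> By [Hy Uy]; split; last by rewrite iterSr.
  case=> [|j] jn //; rewrite iterSr; apply: Hy; lia.
Qed.

Lemma sep_clopen (T : topologicalType) (K L : set T) :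
  hausdorff_space T -> compact [set: T] -> zero_dimensional T ->
  compact K -> compact L -> K `&` L = set0 ->
  exists U, [/\ clopen U, K `<=` U & U `&` L = set0].
Proof.
move=> hT cT zT cK cL KL.
have pt : forall p, exists C, [/\ clopen C, C `&` L = set0 & (K p -> C p)].
  move=> p; case: (pselect (K p)) => Kp; last first.
    by exists set0; split => //; [exact: clopen0 | rewrite set0I].
  have Lp : ~ L p by move=> Lp; have : (K `&` L) p by []; rewrite KL.
  have oL : open (~` L) := closed_openC (compact_closed hT cL).
  have nb : nbhs p (~` L) by apply: open_nbhs_nbhs; split.
  have [D [Dp clD] DL] := zero_dimensional_cvg hT zT cT nb.
  exists D; split => //.
  by apply/seteqP; split => // y [Dy Ly]; apply: (DL y Dy).
have [C HC] := choice pt.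
have Cop : forall i, K i -> open (C i) by move=> i _; have [[]] := HC i.
have KC : K `<=` cover K C by move=> p Kp; exists p => //; have [_ _] := HC p; apply.
have [D' _ KD'] := cover_np cK Cop KC.
move: KD'; set S := (X in cover X C) => KD'.
exists (cover S C); split => //.
- split; first by apply: bigcup_open => i _; have [[]] := HC i.
  by apply: closed_bigcup; [exact: finite_fset | move=> i _; have [[]] := HC i].
- apply/seteqP; split => // y [[i _ Ciy] Ly].
  have [_ + _] := HC i; move/seteqP => [/(_ y) + _]; apply; by split.
Qed.

Lemma fin_bound (A : set nat) : finite_set A -> exists N, forall i, A i -> (i <= N)%N.
Proof.
move=> fA; exists (\max_(i <- fset_set A) i)%N => i Ai.
apply: (@leq_bigmax_seq _ _ xpredT id i) => //.
by rewrite in_fset_set //; apply/mem_set.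
Qed.

Lemma direction (T : topologicalType) (Xmax Xmin : set T) (phi psi : T -> T) :
  hausdorff_space T -> compact [set: T] -> zero_dimensional T ->
  closed Xmax -> closed Xmin ->
  (forall x, ~ Xmax x -> ~ Xmin (phi x)) ->
  (forall y, ~ Xmin y -> ~ Xmax (psi y)) ->
  (forall x, ~ Xmax x -> psi (phi x) = x) ->
  (forall y, ~ Xmin y -> phi (psi y) = y) ->
  {within ~` Xmax, continuous phi} ->
  {within ~` Xmin, continuous psi} ->
  (forall U : set T, clopen U -> Xmin `<=` U ->
      \bigcup_(n in [set: nat]) iter_image phi Xmax n U = [set: T]) ->
  (forall V : set T, clopen V -> Xmax `<=` V ->
      \bigcup_(n in [set: nat]) iter_image psi Xmin n V = [set: T]).
Proof.
move=> hT cT zT cmax cmin hphi hpsi psiphi phipsi cphi cpsi HU V clV XV.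
apply/seteqP; split => // x _.
apply: contrapT => Hno.
have Hall : forall n, ~ V (iter n phi x).
  elim/ltn_ind => n IH Vn; apply: Hno; exists n => //.
  rewrite (iter_imageE hpsi hphi phipsi psiphi); split => // j jn.
  by move=> /XV; apply: IH.
have Hmax : forall n, ~ Xmax (iter n phi x) by move=> n /XV; apply: Hall.
pose W := ~` V.
have WX : W `<=` ~` Xmax by move=> w Ww /XV.
have cW : compact W.
  apply: (subclosed_compact _ cT) => //; exact: open_closedC clV.1.
have cL : compact (phi @` W).
  by apply: continuous_compact => //; exact: continuous_subspaceW cphi.
have cXmin : compact Xmin by exact: (subclosed_compact _ cT).
have dis : Xmin `&` (phi @` W) = set0.
  apply/seteqP; split => // y [Xy [w Ww wy]].
  by apply: (hphi w (WX w Ww)); rewrite wy.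
have [U [clU XU UL]] := sep_clopen hT cT zT cXmin cL dis.
pose S n := [set y | (forall j, (j < n)%N -> ~ Xmin (iter j psi y)) /\ U (iter n psi y)].
have So : forall n, [set: nat] n -> open (S n).
  by move=> n _; apply: open_Sn => //; exact: clU.1.
have Scov : [set: T] `<=` cover [set: nat] S.
  move=> y _; have := HU U clU XU; move/seteqP => [_ /(_ y I)] [n _].
  by rewrite (iter_imageE hphi hpsi psiphi phipsi) => Sy; exists n.
have [D' _ KD'] := cover_np cT So Scov.
have [N HN] := fin_bound (finite_fset D').
have [k Dk [_ Uk]] := KD' (iter N.+1 phi x) I.
have kN := HN k Dk.
have Hpath : forall j, (j < N.+1)%N -> ~ Xmax (iter j phi x) by move=> j _; apply: Hmax.
move: Uk; rewrite (iter_back psiphi Hpath (leqW kN)) subSn // iterS => Uk.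
have : (U `&` phi @` W) (phi (iter (N - k) phi x)).
  by split => //; exists (iter (N - k) phi x) => //; apply: Hall.
by rewrite UL.
Qed.

Theorem proposition4p5 (R : realType) (X : pseudoMetricType R)
  (Xmax Xmin : set X) (phi psi : X -> X) :
  hausdorff_space X -> compact [set: X] -> zero_dimensional X ->
  closed Xmax -> closed Xmin ->
  (forall x, ~ Xmax x -> ~ Xmin (phi x)) ->
  (forall y, ~ Xmin y -> ~ Xmax (psi y)) ->
  (forall x, ~ Xmax x -> psi (phi x) = x) ->
  (forall y, ~ Xmin y -> phi (psi y) = y) ->
  {within ~` Xmax, continuous phi} ->
  {within ~` Xmin, continuous psi} ->
  ((forall U : set X, clopen U -> Xmin `<=` U ->
      \bigcup_(n in [set: nat]) iter_image phi Xmax n U = [set: X]) <->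
   (forall V : set X, clopen V -> Xmax `<=` V ->
      \bigcup_(n in [set: nat]) iter_image psi Xmin n V = [set: X])).
Proof.
move=> hT cT zT cmax cmin hphi hpsi psiphi phipsi cphi cpsi; split.
- exact: direction.
- exact: (direction hT cT zT cmin cmax hpsi hphi phipsi psiphi cpsi cphi).
Qed.
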